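(* Let $\alpha\ge 0$, let $K\subset\mathbb{R}^d$ be a compact set with $\mathcal{H}^{\alpha}(K)<a$ (where $a>0$), and let $\varepsilon>0$. Then there exist a natural number $M$ and a family $\mathfrak{B}$ of closed balls such that: 1) $\mathfrak{B}$ covers $K$; 2) the center of every ball in $\mathfrak{B}$ lies in $K$ and its radius does not exceed $\varepsilon$; 3) $|\mathfrak{B}|=M$ and $\sum_{\overline{B}_{r_i}(x_i)\in\mathfrak{B}} r_i^{\alpha}<a$; 4) for every family $\mathfrak{B}'$ of closed balls satisfying 1), 2), 3) one has $\sum_{\overline{B}_{r_i}(x_i)\in\mathfrak{B}} r_i^{\alpha}\leq\sum_{\overline{B}_{r_i}(x_i)\in\mathfrak{B}'} r_i^{\alpha}$.
   Context: $\overline{B}_r(x)$ denotes the closed ball of radius $r\ge 0$ centered at $x$; $\mathcal{H}^\alpha$ is the $\alpha$-dimensional Hausdorff measure. The number $M$ may depend on $K$ and $\varepsilon$; in condition 3) for $\mathfrak{B}'$, the same $M$ is used. *)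

(* Defs.v *)
From HB Require Import structures.
From mathcomp Require Import all_boot all_order all_algebra.
From mathcomp Require Import all_classical all_reals all_analysis.
Set Implicit Arguments. Unset Strict Implicit. Unset Printing Implicit Defensive.
Import Order.TTheory GRing.Theory Num.Theory.
Import numFieldNormedType.Exports.
Local Open Scope classical_set_scope.
Local Open Scope ring_scope.

(* R^d is modelled as row vectors 'rV[R]_d, with the EUCLIDEAN norm
   (mathcomp's built-in norm on matrices is the sup norm, so we define it). *)
Definition eucl_norm (R : realType) (d : nat) (v : 'rV[R]_d) : R :=
  Num.sqrt (\sum_(i < d) (v ord0 i) ^+ 2).

Definition cball (R : realType) (d : nat) (x : 'rV[R]_d) (r : R) : set 'rV[R]_d :=
  [set y | eucl_norm (y - x) <= r].

Definition ediam (R : realType) (d : nat) (U : set 'rV[R]_d) : \bar R :=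
  ereal_sup [set (eucl_norm (x - y))%:E | x in U & y in U].

Definition hcost (R : realType) (d : nat) (alpha : R) (U : set 'rV[R]_d) : \bar R :=
  if pselect (U = set0) then 0%E else (powR (fine (ediam U)) alpha)%:E.

Definition hausdorff_content (R : realType) (d : nat) (alpha delta : R)
    (A : set 'rV[R]_d) : \bar R :=
  ereal_inf [set (\sum_(0 <= i <oo) hcost alpha (U i))%E |
             U in [set U : nat -> set 'rV[R]_d |
                    A `<=` \bigcup_i U i /\ forall i, (ediam (U i) <= delta%:E)%E]].

(* H^alpha(A) = lim_{delta -> 0+} H^alpha_delta(A) = sup_{delta > 0} H^alpha_delta(A) *)
Definition hausdorff_measure (R : realType) (d : nat) (alpha : R)
    (A : set 'rV[R]_d) : \bar R :=
  ereal_sup [set hausdorff_content alpha delta A | delta in [set delta : R | 0 < delta]].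

Definition admissible_family (R : realType) (d : nat) (alpha a eps : R)
    (K : set 'rV[R]_d) (M : nat) (c : 'I_M -> 'rV[R]_d) (r : 'I_M -> R) : Prop :=
  [/\ K `<=` \bigcup_i cball (c i) (r i),
      (forall i, K (c i) /\ 0 <= r i /\ r i <= eps)
    & \sum_(i < M) powR (r i) alpha < a].

(* Main.v *)
Require Import Defs.
From HB Require Import structures.
From mathcomp Require Import all_boot all_order all_algebra.
From mathcomp Require Import all_classical all_reals all_analysis.
From mathcomp Require Import finmap.
From mathcomp Require Import ring lra.
Import Order.TTheory GRing.Theory Num.Theory.
Import numFieldNormedType.Exports.
Local Open Scope classical_set_scope.
Local Open Scope ring_scope.

Lemma ccomp {A B C : topologicalType} {f : A -> B} {g : B -> C} {x : A} :
  {for x, continuous f} -> {for f x, continuous g} ->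
  {for x, continuous (fun y => g (f y))}.
Proof. move=> hf hg; have := continuous_comp hf hg; exact. Qed.

Lemma eucl_cont (R : realType) (d : nat) : continuous (@eucl_norm R d).
Proof.
move=> v; rewrite /eucl_norm.
apply: (ccomp (f := fun v : 'rV[R]_d => \sum_(i < d) (v ord0 i) ^+ 2)
  (g := @Num.sqrt R)); last exact: sqrt_continuous.
apply: continuous_big.
  exact: add_continuous.
move=> i _ w.
apply: (ccomp (f := fun v : 'rV[R]_d => v ord0 i) (g := fun x : R => x ^+ 2)).
  exact: coord_continuous.
exact: exprn_continuous.
Qed.

Lemma eucl_cont_sub (R : realType) (d : nat) (y : 'rV[R]_d) :
  continuous (fun v : 'rV[R]_d => eucl_norm (y - v)).
Proof.
move=> v; apply: (ccomp (f := fun v : 'rV[R]_d => y - v) (g := @eucl_norm R d)); last exact: eucl_cont.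
have := @continuousB R _ _ (fun=> y) id v (@cst_continuous _ _ y v) (fun t h => h).
exact.
Qed.

Lemma hcont (R : realType) (al : R) : 0 <= al -> continuous (fun x : R => powR `|x| al).
Proof.
rewrite le_eqVlt => /predU1P[<-|al0].
  by under eq_fun do rewrite powRr0; exact: cst_continuous.
move=> x; have [->|x0] := eqVneq x 0.
  rewrite /continuous_at /= normr0 powR0 ?gt_eqF//.
  apply/cvgrPdist_lt => e e0.
  near=> y; rewrite sub0r normrN ger0_norm ?powR_ge0//.
  have -> : e = powR (powR e al^-1) al.
    by rewrite -powRrM mulVf ?gt_eqF// powRr1// ltW.
  apply: gt0_ltr_powR => //; rewrite ?nnegrE ?powR_ge0//.
  near: y; apply/nbhs_normP; exists (powR e al^-1); first by rewrite /= powR_gt0.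
  by move=> y /=; rewrite sub0r normrN.
have h1 : {for (`|x| : R), continuous (fun y : R => powR y al)}.
  apply: differentiable_continuous; apply/derivable1_diffP.
  by apply: derivable_powR; rewrite in_itv /= andbT normr_gt0.
have h2 : {for x, continuous (fun y : R => `|y|)} by apply: norm_continuous.
have := continuous_comp h2 h1. 
exact.
Unshelve. all: by end_near. Qed.




Module MinPart.
Import ArrowAsProduct.

Lemma minim (R : realType) (d : nat) (al a eps : R) (K : set 'rV[R]_d) (M : nat)
  (c0 : 'I_M -> 'rV[R]_d) (r0 : 'I_M -> R) :
  0 <= al -> compact K -> admissible_family al a eps K c0 r0 ->
  exists (c : 'I_M -> 'rV[R]_d) (r : 'I_M -> R),
    admissible_family al a eps K c r /\
    (forall (c' : 'I_M -> 'rV[R]_d) (r' : 'I_M -> R),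
        admissible_family al a eps K c' r' ->
        \sum_(i < M) powR (r i) al <= \sum_(i < M) powR (r' i) al).
Proof.
move=> al0 cK [cov0 cr0 s0].
pose T := 'I_M -> ('rV[R]_d * R)%type.
pose P := [set f : T | forall i, (K `*` `[0, eps]) (f i)].
pose C := [set f : T | K `<=` \bigcup_i cball (f i).1 (f i).2].
have cP : compact P.
  have := @tychonoff 'I_M (fun=> ('rV[R]_d * R)%type) (fun=> K `*` `[0, eps]).
  apply; move=> i; apply: compact_setX => //; exact: segment_compact.
have clC : closed C.
  have -> : C = \bigcap_(y in K) \bigcup_(i in [set: 'I_M])
     ((fun f : T => eucl_norm (y - (f i).1) - (f i).2) @^-1` [set x | x <= 0]).
    rewrite predeqE => f; split.
      move=> Cf y Ky; have [i _ hi] := Cf y Ky.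
      by exists i => //=; rewrite subr_le0.
    move=> Cf y Ky; have [i _ hi] := Cf y Ky.
    by exists i => //; move: hi; rewrite /= subr_le0.
  apply: closed_bigI => y _; apply: closed_bigcup => //.
    exact: finite_finset.
  move=> i _; apply: preimage_closed; last exact: closed_le.
  have h0 : continuous (fun f : T => f i) by exact: proj_continuous.
  have h1 : continuous (fun f : T => (f i).1).
    by move=> f; apply: (ccomp (f := fun f : T => f i) (g := fst)); [exact: h0 | exact: cvg_fst].
  have h3 : continuous (fun f : T => (f i).2).
    by move=> f; apply: (ccomp (f := fun f : T => f i) (g := snd)); [exact: h0 | exact: cvg_snd].
  have h2 : continuous (fun f : T => eucl_norm (y - (f i).1)).
    move=> f; apply: (ccomp (f := fun f : T => (f i).1) (g := fun v => eucl_norm (y - v))).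
      exact: h1.
    exact: eucl_cont_sub.
  have h4 : continuous (fun f : T => eucl_norm (y - (f i).1) - (f i).2).
    by move=> f; have := continuousB (h2 f) (h3 f); exact.
  by move=> f _; exact: h4.
have cPC : compact (P `&` C) := compact_closedI cP clC.
pose G := fun f : T => \sum_(i < M) powR `|(f i).2| al.
have cG : continuous G.
  move=> f; apply: continuous_big; first exact: add_continuous.
  move=> i _ g.
  have h0 : continuous (fun f : T => f i) by exact: proj_continuous.
  have h3 : continuous (fun f : T => (f i).2).
    by move=> f'; apply: (ccomp (f := fun f : T => f i) (g := snd)); [exact: h0 | exact: cvg_snd].
  by apply: (ccomp (f := fun f : T => (f i).2) (g := fun x : R => powR `|x| al)); [exact: h3 | exact: hcont].
pose f0 : T := fun i => (c0 i, r0 i).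
have PCf0 : (P `&` C) f0.
  split; last by [].
  by move=> i; have [? [? ?]] := cr0 i; split => //=; rewrite in_itv /=; apply/andP.
have [fs /set_mem [Pfs Cfs] fsmin] := compact_EVT_min (ex_intro _ f0 PCf0) cPC (continuous_subspaceT cG).
have Gr (c' : 'I_M -> 'rV[R]_d) (r' : 'I_M -> R) : (forall i, 0 <= r' i) ->
    G (fun i => (c' i, r' i)) = \sum_(i < M) powR (r' i) al.
  by move=> hr; apply: eq_bigr => i _ /=; rewrite ger0_norm.
have Pi i : K (fs i).1 /\ 0 <= (fs i).2 /\ (fs i).2 <= eps.
  by have [/= ? ] := Pfs i; rewrite in_itv /= => /andP[].
have eqs : G fs = \sum_(i < M) powR (fs i).2 al.
  by apply: eq_bigr => i _ /=; rewrite ger0_norm //; have [_ []] := Pi i.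
exists (fun i => (fs i).1), (fun i => (fs i).2); split.
  split => //; rewrite -eqs; apply: le_lt_trans s0; rewrite -(Gr c0); last by move=> i; have [_ []] := cr0 i.
  by apply: fsmin; apply/mem_set.
move=> c' r' [cov' cr' _]; rewrite -eqs -(Gr c'); last by move=> i; have [_ []] := cr' i.
apply: fsmin; apply/mem_set; split; last by [].
by move=> i; have [? [? ?]] := cr' i; split => //=; rewrite in_itv /=; apply/andP.
Qed.

End MinPart.

Lemma pick_radius (R : realType) (al x eps eta : R) : 0 <= al -> 0 <= x -> x < eps -> 0 < eta ->
  exists r, [/\ x < r, r <= eps & powR r al <= powR x al + eta].
Proof.
move=> al0 x0 xe et0.
have := @hcont R al al0 x; move/cvgrPdist_lt/(_ eta et0) => /nbhs_normP [del del0 hdel].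
pose r := Num.min (x + del / 2) eps.
have xr : x < r by rewrite lt_min xe andbT ltrDl divr_gt0.
exists r; split => //; first by rewrite ge_min lexx orbT.
have r0 : 0 <= r by apply: le_trans x0 (ltW xr).
have := hdel r; rewrite /= (ger0_norm x0) (ger0_norm r0) => /(_ _)/ltW.
have rd : `|x - r| < del.
  rewrite ltr0_norm ?subr_lt0 // opprB ltrBlDl.
  rewrite /r gt_min ltrD2l; apply/orP; left.
  by rewrite ltr_pdivrMr // ltr_pMr // ltr1n.
move=> /(_ rd) h; rewrite -lerBlDl; apply: le_trans h.
by rewrite distrC ler_norm.
Qed.

Lemma sum_sub_iota (R : realType) (F : nat -> R) (s : seq nat) (N : nat) :
  (forall i, 0 <= F i) -> uniq s -> (forall i, i \in s -> (i < N)%N) ->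
  \sum_(i <- s) F i <= \sum_(i < N) F i.
Proof.
move=> F0 us sN.
rewrite -(big_mkord xpredT) /index_iota subn0 [X in _ <= X](bigID (mem s)) /=.
have -> : \sum_(i <- iota 0 N | i \in s) F i = \sum_(i <- s) F i.
  rewrite -big_filter; apply: perm_big; apply: uniq_perm.
  - by rewrite filter_uniq // iota_uniq.
  - exact: us.
  by move=> i; rewrite mem_filter mem_iota /= add0n; case: (boolP (i \in s)) => // /sN ->.
by rewrite lerDl sumr_ge0.
Qed.

Lemma geom_le1 (R : realType) (N : nat) : \sum_(i < N) (2^-1 : R) ^+ i.+1 <= 1.
Proof.
suff -> : \sum_(i < N) (2^-1 : R) ^+ i.+1 = 1 - (2^-1) ^+ N.
  by rewrite lerBlDr lerDl exprn_ge0.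
elim: N => [|N IH]; first by rewrite big_ord0 expr0 subrr.
rewrite big_ord_recr /= IH !exprS.
by field.
Qed.

Lemma seq_bound (s : seq nat) : exists N, forall i, i \in s -> (i < N)%N.
Proof.
elim: s => [|j s [N IH]]; first by exists 0%N.
exists (maxn j.+1 N) => i; rewrite inE => /orP[/eqP->|/IH iN].
  by rewrite leq_max leqnn.
by rewrite leq_max iN orbT.
Qed.

Lemma eucl_cont_subr (R : realType) (d : nat) (y : 'rV[R]_d) :
  continuous (fun v : 'rV[R]_d => eucl_norm (v - y)).
Proof.
move=> v; apply: (ccomp (f := fun v : 'rV[R]_d => v - y) (g := @eucl_norm R d)); last exact: eucl_cont.
have := @continuousB R _ _ id (fun=> y) v (fun t h => h) (@cst_continuous _ _ y v).
exact.
Qed.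

Lemma exist_adm (R : realType) (d : nat) (al a eps : R) (K : set 'rV[R]_d) :
  0 <= al -> compact K -> 0 < a -> (hausdorff_measure al K < a%:E)%E ->
  0 < eps ->
  exists (M : nat) (c : 'I_M -> 'rV[R]_d) (r : 'I_M -> R),
    admissible_family al a eps K c r.
Proof.
move=> al0 cK a0 hK e0.
have d0 : 0 < eps / 2 by rewrite divr_gt0.
have : (hausdorff_content al (eps/2) K < a%:E)%E.
  by apply: le_lt_trans hK; apply: ereal_sup_ubound; exists (eps/2).
case/ereal_inf_lt => _ [U [covU dU] <-] SU.
set S := (\sum_(0 <= i <oo) hcost al (U i))%E in SU.
have hc0 i : (0 <= hcost al (U i))%E.
  by rewrite /hcost; case: pselect => h; rewrite ?lee_fin ?powR_ge0.
have S0 : (0 <= S)%E by apply: nneseries_ge0 => *; exact: hc0.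
have Sfin : S \is a fin_num by rewrite ge0_fin_numE // (lt_trans SU) // ltry.
pose b := fine S.
have bS : S = b%:E by rewrite fineK.
pose s := a - b.
have s0 : 0 < s by rewrite subr_gt0 -lte_fin -bS.
pose x i := fine (ediam (U i)).
have xP i : U i !=set0 -> [/\ 0 <= x i, x i <= eps / 2, hcost al (U i) = (powR (x i) al)%:E &
     forall u v, U i u -> U i v -> eucl_norm (u - v) <= x i].
  move=> [u Uu].
  have ge0 : (0 <= ediam (U i))%E.
    apply: ereal_sup_ubound; exists u => //; exists u => //.
    by rewrite subrr /eucl_norm big1 ?sqrtr0 // => j _; rewrite mxE expr0n.
  have fin : ediam (U i) \is a fin_num by rewrite ge0_fin_numE // (le_lt_trans (dU i)) // ltry.
  have xE : ediam (U i) = (x i)%:E by rewrite fineK.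
  split.
  - by rewrite -lee_fin -xE.
  - by rewrite -lee_fin -xE.
  - rewrite /hcost; case: pselect => // U0.
    by exfalso; have := Uu; rewrite U0.
  move=> v w Uv Uw; rewrite -lee_fin -xE.
  by apply: ereal_sup_ubound; exists v => //; exists w.
pose eta i := s / 2 * (2^-1 : R) ^+ i.+1.
have eta0 i : 0 < eta i by rewrite /eta mulr_gt0 ?divr_gt0 // exprn_gt0 // invr_gt0.
have hr i : exists r, [/\ 0 < r, r <= eps &
    (U i !=set0 -> x i < r /\ powR r al <= powR (x i) al + eta i)].
  case: (pselect (U i !=set0)) => [ne|ne].
    have [x0 xe _ _] := xP i ne.
    have xlt : x i < eps by apply: le_lt_trans xe _; rewrite ltr_pdivrMr // ltr_pMr // ltr1n.
    have [r [xr re hr]] := @pick_radius R al (x i) eps (eta i) al0 x0 xlt (eta0 i).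
    by exists r; split => //; apply: le_lt_trans x0 xr.
  by exists eps; split.
have [r hrP] := choice hr.
have hc i : exists c, (U i `&` K) !=set0 -> (U i `&` K) c.
  case: (pselect ((U i `&` K) !=set0)) => [[c hc]|h]; first by exists c.
  by exists 0 => /h.
have [c hcP] := choice hc.
pose W i := [set z | eucl_norm (z - c i) < r i].
pose D := [set i | (U i `&` K) !=set0].
have covW : K `<=` cover D W.
  move=> k Kk; have [i _ Uik] := covU k Kk.
  have ne : (U i `&` K) !=set0 by exists k.
  exists i => //; have [Uci Kci] := hcP i ne.
  have [_ _ /(_ (ex_intro _ k Uik))[xr _]] := hrP i.
  have [_ _ _ hd] := xP i (ex_intro _ k Uik).
  by rewrite /W /=; apply: le_lt_trans (hd _ _ Uik Uci) xr.
have oW i : D i -> open (W i).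
  move=> _; rewrite /W.
  have -> : [set z | eucl_norm (z - c i) < r i] =
     (fun z => eucl_norm (z - c i)) @^-1` [set y | y < r i] by [].
  by apply: open_comp; [move=> z _; exact: eucl_cont_subr | exact: open_lt].
move: cK; rewrite compact_cover => /(_ nat D W oW covW) [D' sD' covD'].
pose sq := enum_fset D'.
exists (size sq), (fun j => c (nth 0%N sq j)), (fun j => r (nth 0%N sq j)).
split.
- move=> k Kk; have [i Di Wik] := covD' k Kk.
  have im : (index i sq < size sq)%N by rewrite index_mem.
  by exists (Ordinal im) => //; rewrite /cball /= nth_index //; exact: ltW.
- move=> j; set i := nth 0%N sq j.
  have iD' : i \in sq by apply: mem_nth.
  have Di : D i by apply/set_mem/sD'.
  have [Uci Kci] := hcP i Di; have [r0 re _] := hrP i.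
  by split => //; split => //; exact: ltW.
have -> : \sum_(j < size sq) powR (r (nth 0%N sq j)) al = \sum_(i <- sq) powR (r i) al.
  by rewrite [RHS](big_nth 0%N) big_mkord.
have [N hN] := seq_bound sq.
have hfin i : hcost al (U i) \is a fin_num by rewrite /hcost; case: pselect.
apply: (@le_lt_trans _ _ (\sum_(i <- sq) (fine (hcost al (U i)) + eta i))).
  rewrite big_seq_cond [X in _ <= X]big_seq_cond; apply: ler_sum => i /andP[iD' _].
  have Di : D i by apply/set_mem/sD'.
  have ne : U i !=set0 by case: Di => k [Uk _]; exists k.
  have [_ _ hci _] := xP i ne; rewrite hci /=.
  by have [_ _ /(_ ne)[_ h]] := hrP i; exact: h.
apply: (@le_lt_trans _ _ (\sum_(i < N) (fine (hcost al (U i)) + eta i))).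
  apply: sum_sub_iota => //; last exact: fset_uniq.
  by move=> i; rewrite addr_ge0 ?fine_ge0 ?hc0 // ltW.
rewrite big_split /=.
have h1 : \sum_(i < N) fine (hcost al (U i)) <= b.
  rewrite -lee_fin -bS -sumEFin.
  under eq_bigr do rewrite fineK ?hfin //.
  have := @nneseries_lim_ge R (fun i => hcost al (U i)) xpredT 0%N N (fun n _ _ => hc0 n).
  by rewrite big_mkord.
have h2 : \sum_(i < N) eta i <= s / 2.
  rewrite /eta -mulr_sumr; apply: le_trans (ler_wpM2l _ (geom_le1 _ _)) _.
    by rewrite divr_ge0 // ltW.
  by rewrite mulr1.
rewrite /s in h2 s0; lra.
Qed.

Theorem lemma9 (R : realType) (d : nat) (alpha a eps : R) (K : set 'rV[R]_d) :
  0 <= alpha -> compact K -> 0 < a -> (hausdorff_measure alpha K < a%:E)%E ->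
  0 < eps ->
  exists (M : nat) (c : 'I_M -> 'rV[R]_d) (r : 'I_M -> R),
    admissible_family alpha a eps K c r /\
    (forall (c' : 'I_M -> 'rV[R]_d) (r' : 'I_M -> R),
        admissible_family alpha a eps K c' r' ->
        \sum_(i < M) powR (r i) alpha <= \sum_(i < M) powR (r' i) alpha).
Proof.
move=> al0 cK a0 hK e0.
have [M [c [r adm]]] := @exist_adm R d alpha a eps K al0 cK a0 hK e0.
have [c' [r' H]] := @MinPart.minim R d alpha a eps K M c r al0 cK adm.
by exists M, c', r'.
Qed.
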